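(* For any signature $\Sigma$, the map $r_{A_p(\Sigma)}:\mathbf N(T(\Sigma))\to\mathbb K\langle A_p(\Sigma)\rangle$ is injective.
   Context: $\mathbb K$ is a field of characteristic zero. A signature is a set $\Sigma$ with arity map $|\cdot|:\Sigma\to\mathbb N$. A $\Sigma$-term is the leaf $\bot$ or $s(t_1,\dots,t_n)$ with $s$ of arity $n$, $t_i$ terms; degree = number of internal nodes. A $\Sigma$-forest is a finite word of terms; reduced if no term is $\bot$. $\mathbf N(T(\Sigma))$ is the vector space (natural Hopf algebra of the free operad) with basis $E_f$ indexed by reduced $\Sigma$-forests $f$. Internal nodes of a forest $f$ are identified with $1,\dots,\deg f$ by left-to-right preorder; $d_f(i)$ is the decoration of $i$; $i\to^f_j i'$ means $i'$ is the $j$-th child of $i$; roots are the roots of the terms. A $\Sigma$-forest-like alphabet is a set $A$ with arbitrary: subset $R^A$, subsets $D^A_s$ ($s\in\Sigma$), binary relations $\to^A_j$ ($j\ge1$). $\mathbb K\langle A\rangle$: noncommutative polynomials with possibly infinite support and bounded degree. A word $w\in A^*$ is $A$-compatible with $f$ if it has length $\deg f$, $w(i)\in R^A$ for each root $i$, $w(i)\in D^A_{d_f(i)}$ for each node $i$, and $i\to^f_j i'$ implies $w(i)\to^A_j w(i')$; $r_A$ is the linear map with $r_A(E_f)=\sum_{w\in A^*}[w\ A\text{-compatible with }f]\,w$. The alphabet of positions $A_p(\Sigma)=\{a^s_u: s\in\Sigma,\ u\in\mathbb N^*\}$ has root relation $\{a^s_{0^\ell}:s\in\Sigma,\ell\in\mathbb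 N\}$, $D_s=\{a^s_u:u\in\mathbb N^*\}$, and $a^s_u\to_j a^{s'}_v$ iff $v=u\,j\,0^\ell$ for some $\ell\in\mathbb N$. *)

(* Defs.v *)
From mathcomp Require Import all_boot all_algebra.
From mathcomp Require Import boolp.
From Stdlib Require List.
Set Implicit Arguments. Unset Strict Implicit. Unset Printing Implicit Defensive.
Import GRing.Theory.

Section Terms.
Variable Sig : Type.
Variable arity : Sig -> nat.

Inductive term : Type :=
| Bot : term
| Node : Sig -> seq term -> term.

Fixpoint wf_term (t : term) : Prop :=
  match t with
  | Bot => True
  | Node s ts => size ts = arity s /\ (fix wfl (l : seq term) : Prop :=
        match l with [::] => True | u :: us => wf_term u /\ wfl us end) ts
  end.

Fixpoint deg_term (t : term) : nat :=
  match t with Bot => 0 | Node _ ts => (sumn (map deg_term ts)).+1 end.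

Fixpoint decs_term (t : term) : seq Sig :=
  match t with Bot => [::] | Node s ts => s :: flatten (map decs_term ts) end.

(* edges (i, j, i') meaning: node i' is the j-th child (j >= 1) of node i,
   internal nodes being numbered in preorder starting at offset k *)
Fixpoint edges_term (t : term) (k : nat) : seq (nat * nat * nat) :=
  match t with
  | Bot => [::]
  | Node _ ts =>
    (fix go (l : seq term) (j off : nat) : seq (nat * nat * nat) :=
       match l with
       | [::] => [::]
       | u :: us =>
         (if u is Node _ _ then [:: (k, j, off)] else [::])
           ++ edges_term u off ++ go us j.+1 (off + deg_term u)
       end) ts 1 k.+1
  end.

Definition forest := seq term.

Definition wf_forest (f : forest) : Prop := forall t, List.In t f -> wf_term t.
Definition reduced (f : forest) : Prop := forall t, List.In t f -> t <> Bot.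

Definition deg (f : forest) : nat := sumn (map deg_term f).
Definition decs (f : forest) : seq Sig := flatten (map decs_term f).

Fixpoint edges_from (f : forest) (off : nat) : seq (nat * nat * nat) :=
  match f with
  | [::] => [::]
  | t :: ts => edges_term t off ++ edges_from ts (off + deg_term t)
  end.
Definition edges (f : forest) := edges_from f 0.

Fixpoint roots_from (f : forest) (off : nat) : seq nat :=
  match f with
  | [::] => [::]
  | t :: ts => (if t is Node _ _ then [:: off] else [::])
                 ++ roots_from ts (off + deg_term t)
  end.
Definition roots (f : forest) := roots_from f 0.

Record fl_alphabet := FLAlphabet {
  letter :> Type;
  rootA : letter -> Prop;
  decA : Sig -> letter -> Prop;
  childA : nat -> letter -> letter -> Prop
}.

(* A-compatibility of a word with a forest (internal nodes are numbered
   0, ..., deg f - 1 in preorder; letter i of w is onth w i) *)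
Definition compatible (A : fl_alphabet) (w : seq A) (f : forest) : Prop :=
  [/\ size w = deg f,
      forall i a, i \in roots f -> onth w i = Some a -> rootA a,
      forall i s a, onth (decs f) i = Some s -> onth w i = Some a -> decA s a
    & forall i j i' a b, (i, j, i') \in edges f ->
        onth w i = Some a -> onth w i' = Some b -> childA j a b].

(* coefficient of the word w in r_A(E_f) *)
Definition rA_coef (K : nzRingType) (A : fl_alphabet) (f : forest) (w : seq A) : K :=
  (if pselect (compatible w f) then 1 else 0)%R.

(* the alphabet of positions A_p(Sigma): a^s_u is the pair (s, u) *)
Definition Ap : fl_alphabet :=
  @FLAlphabet (Sig * seq nat)
    (fun a => exists l, a.2 = nseq l 0%N)
    (fun s a => a.1 = s)
    (fun j a b => exists l, b.2 = a.2 ++ j :: nseq l 0%N).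

End Terms.

(* Main.v *)
Require Import Defs.
From mathcomp Require Import all_boot all_algebra.
From mathcomp Require Import boolp.
From mathcomp Require Import zify.
Import GRing.Theory.

Set Implicit Arguments. Unset Strict Implicit.
Section S.
Variable Sig : Type.
Variable arity : Sig -> nat.
Notation term := (term Sig).
Notation L := (Sig * seq nat)%type.

Section CL.
Variable canon : term -> seq nat -> seq L.
Variable P : seq nat.
Fixpoint canonL0 (l : seq term) (j : nat) : seq L :=
  match l with [::] => [::] | u :: us => canon u (rcons P j) ++ canonL0 us j.+1 end.
End CL.

Fixpoint canon (t : term) (P : seq nat) : seq L :=
  match t with
  | Bot => [::]
  | Node s ts => (s, P) :: (fix go (l : seq term) (j : nat) : seq L :=
     match l with [::] => [::] | u :: us => canon u (rcons P j) ++ go us j.+1 end) ts 1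
  end.
Definition canonL := canonL0 canon.
Lemma canonE s ts P : canon (Node s ts) P = (s, P) :: canonL P ts 1.
Proof. reflexivity. Qed.

Section EL.
Variable k : nat.
Fixpoint edgesL (l : seq term) (j off : nat) : seq (nat * nat * nat) :=
       match l with
       | [::] => [::]
       | u :: us =>
         (if u is Node _ _ then [:: (k, j, off)] else [::])
           ++ edges_term u off ++ edgesL us j.+1 (off + deg_term u)
       end.
End EL.
Lemma edgesE s ts k : edges_term (Node s ts) k = edgesL k ts 1 k.+1.
Proof. reflexivity. Qed.
Fixpoint wfL (l : seq term) : Prop := match l with [::] => True | u :: us => wf_term arity u /\ wfL us end.
Lemma wfE s ts : wf_term arity (Node s ts) = (size ts = arity s /\ wfL ts).
Proof. reflexivity. Qed.

Fixpoint term_ind2 (Q : term -> Prop) (HB : Q (Bot Sig))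
  (HN : forall s ts, List.Forall Q ts -> Q (Node s ts)) (t : term) : Q t :=
  match t with
  | Bot => HB
  | Node s ts => HN s ts ((fix F (l : seq term) : List.Forall Q l :=
       match l with [::] => List.Forall_nil Q
       | u :: us => List.Forall_cons u (term_ind2 HB HN u) (F us) end) ts)
  end.

Lemma size_canon (t : term) P : size (canon t P) = deg_term t.
Proof.
elim/term_ind2: t P => // s ts IH P; rewrite canonE /= -/(canonL _ _ _).
congr S; elim: IH P 1 => //= u us Hu _ IHus P j.
by rewrite size_cat Hu IHus.
Qed.

Lemma size_decs (t : term) : size (decs_term t) = deg_term t.
Proof.
elim/term_ind2: t => // s ts IH /=; congr S.
by elim: IH => //= u us Hu _ IHus; rewrite size_cat Hu IHus.
Qed.

Lemma fst_canon (t : term) P : map fst (canon t P) = decs_term t.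
Proof.
elim/term_ind2: t P => // s ts IH P; rewrite canonE /=.
congr cons; elim: IH P 1 => //= u us Hu _ IHus P j.
by rewrite map_cat Hu IHus.
Qed.

Lemma onth_mid (T : Type) (pre : seq T) x rest : onth (pre ++ x :: rest) (size pre) = Some x.
Proof. by rewrite onth_cat ltnn subnn. Qed.

Lemma FE (t : term) : forall k P (W pre post : seq L), W = pre ++ canon t P ++ post -> size pre = k ->
  forall i j i', (i, j, i') \in edges_term t k ->
  exists a b, onth W i = Some a /\ onth W i' = Some b /\ b.2 = rcons a.2 j.
Proof.
elim/term_ind2: t => // s ts IH k P W pre post -> Hk i j i'.
rewrite edgesE canonE.
have HW : pre ++ ((s, P) :: canonL P ts 1) ++ post = rcons pre (s, P) ++ canonL P ts 1 ++ post.
  by rewrite -cats1 -catA.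
have Hpar : onth (pre ++ ((s, P) :: canonL P ts 1) ++ post) k = Some (s, P).
  by rewrite -Hk onth_mid.
move: Hpar; rewrite HW; clear HW.
have : size (rcons pre (s, P)) = k.+1 by rewrite size_rcons Hk.
move: (rcons pre (s, P)) k.+1 1 => pre' off j0.
elim: IH pre' off j0 post => // u us Hu _ IHus pre' off j0 post Hoff Hpar.
rewrite /= !mem_cat => /orP[|/orP[]].
- case: u Hu Hpar => // s' ts' _ Hpar; rewrite mem_seq1 => /eqP [-> -> ->].
  exists (s, P), (s', rcons P j0); split => //; split => //.
  by rewrite -Hoff /canonL /= -/(canonL _ _ _) -catA /= onth_mid.
- move=> Hin; apply: (Hu off (rcons P j0) _ pre' (canonL P us j0.+1 ++ post)) => //.
  by rewrite /canonL /= -!catA.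
- move=> Hin.
  have := IHus (pre' ++ canon u (rcons P j0)) (off + deg_term u) j0.+1 post.
  rewrite -!catA; apply => //.
  by rewrite size_cat Hoff size_canon.
  by move: Hpar; rewrite /canonL /= -!catA.
Qed.

Fixpoint canonF (f : seq term) (m : nat) : seq L :=
  match f with [::] => [::] | t :: ts => canon t (nseq m 0) ++ canonF ts m.+1 end.

Lemma size_canonF f m : size (canonF f m) = deg f.
Proof. by elim: f m => //= t ts IH m; rewrite size_cat size_canon IH. Qed.

Lemma fst_canonF f m : map fst (canonF f m) = decs f.
Proof. by elim: f m => //= t ts IH m; rewrite map_cat fst_canon IH. Qed.

Lemma FEF (f : seq term) : forall m off (W pre : seq L), W = pre ++ canonF f m -> size pre = off ->
  forall i j i', (i, j, i') \in edges_from f off ->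
  exists a b, onth W i = Some a /\ onth W i' = Some b /\ b.2 = rcons a.2 j.
Proof.
elim: f => // t ts IH m off W pre -> Hoff i j i' /=; rewrite mem_cat => /orP[] Hin.
- exact: (FE (post := canonF ts m.+1) _ Hoff Hin).
- have := IH m.+1 (off + deg_term t) _ (pre ++ canon t (nseq m 0)) erefl.
  rewrite -catA; apply => //; by rewrite size_cat Hoff size_canon.
Qed.

Lemma FRF (f : seq term) : forall m off (W pre : seq L), W = pre ++ canonF f m -> size pre = off ->
  forall i, i \in roots_from f off -> exists a, onth W i = Some a /\ exists l, a.2 = nseq l 0.
Proof.
elim: f => // t ts IH m off W pre -> Hoff i /=; rewrite mem_cat => /orP[] Hin.
- case: t Hin => // s us; rewrite mem_seq1 => /eqP ->.
  exists (s, nseq m 0); split; last by exists m.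
  by rewrite canonE /= -Hoff onth_mid.
- have := IH m.+1 (off + deg_term t) _ (pre ++ canon t (nseq m 0)) erefl.
  rewrite -catA; apply => //; by rewrite size_cat Hoff size_canon.
Qed.

Lemma compat_self (f : seq term) : @compatible _ (Ap Sig) (canonF f 0) f.
Proof.
split.
- exact: size_canonF.
- move=> i a Hi Ha.
  have [a' [Ha' Hl]] := @FRF f 0 0 (canonF f 0) [::] erefl erefl i Hi.
  by move: Ha; rewrite Ha' => -[<-].
- move=> i s a Hs Ha.
  move: Hs; rewrite /decs -/(decs f) -(fst_canonF f 0) onth_map Ha /=.
  by case.
- move=> i j i' a b Hin Ha Hb.
  have [a' [b' [Ha' [Hb' E]]]] := @FEF f 0 0 (canonF f 0) [::] erefl erefl i j i' Hin.
  move: Ha Hb; rewrite Ha' Hb' => -[<-] [<-].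
  by exists 0; rewrite E cats1.
Qed.

Definition pre (P x : seq nat) := exists q, x = P ++ q.
Definition NP (P : seq nat) (r : seq L) := forall a, ohead r = Some a -> ~ pre P a.2.
Definition NPj (P : seq nat) j (r : seq L) :=
  forall a j', j <= j' -> ohead r = Some a -> ~ pre (rcons P j') a.2.

Lemma HC (t : term) Q a : ohead (canon t Q) = Some a -> a.2 = Q.
Proof. by case: t => //= s ts [<-]. Qed.

Lemma HCL (ts : seq term) : forall P j a, ohead (canonL P ts j) = Some a ->
  exists j', j <= j' /\ pre (rcons P j') a.2.
Proof.
elim: ts => // u us IH P j a; rewrite /canonL /= -/(canonL _ _ _).
case E: (canon u (rcons P j)) => [|x xs] /=.
- by move/IH => [j' [Hj Hp]]; exists j'; split => //; apply: ltnW.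
- move=> [<-]; exists j; split => //; exists [::].
  by rewrite cats0; apply: (@HC u); rewrite E.
Qed.

Lemma cat_cancel (P q q' : seq nat) : P ++ q = P ++ q' -> q = q'.
Proof. by elim: P => //= x P IH [] /IH. Qed.

Lemma pre_rcons_inj P j j' x : pre (rcons P j) x -> pre (rcons P j') x -> j = j'.
Proof.
move=> [q ->] [q'] /eqP; rewrite -!cats1 -!catA /= => /eqP /cat_cancel.
by case.
Qed.

Lemma ohead_cat (X r : seq L) : ohead (X ++ r) = if X is x :: _ then Some x else ohead r.
Proof. by case: X. Qed.

Definition Lstmt (t : term) := forall t' P r r', wf_term arity t -> wf_term arity t' ->
  NP P r -> NP P r' -> canon t P ++ r = canon t' P ++ r' -> t = t' /\ r = r'.

Lemma NP_step P us j r : NPj P j r -> NP (rcons P j) (canonL P us j.+1 ++ r).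
Proof.
move=> H a; rewrite ohead_cat.
case E: (canonL P us j.+1) => [|x xs].
- by apply: H.
- move=> [<-] Hp.
  have [j' [Hj Hp']] := @HCL us P j.+1 x ltac:(by rewrite E).
  by move: (pre_rcons_inj Hp Hp') => E'; move: Hj; rewrite E' ltnn.
Qed.

Lemma LLgen (us : seq term) : List.Forall Lstmt us -> forall us' P j r r',
  wfL us -> wfL us' -> size us = size us' -> NPj P j r -> NPj P j r' ->
  canonL P us j ++ r = canonL P us' j ++ r' -> us = us' /\ r = r'.
Proof.
elim=> [|u us0 Hu _ IH] [|u' us0'] // P j r r' /=.
move=> [wu wus] [wu' wus'] [Hs] Hr Hr'.
rewrite /canonL /= -/(canonL _ _ _) -!catA => E.
have [Eu E2] := Hu _ _ _ _ wu wu' (@NP_step P us0 j r Hr) (@NP_step P us0' j r' Hr') E.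
have Hr1 : NPj P j.+1 r by move=> a j' Hj; apply: Hr; apply: ltnW.
have Hr1' : NPj P j.+1 r' by move=> a j' Hj; apply: Hr'; apply: ltnW.
have [-> ->] := IH us0' P j.+1 r r' wus wus' Hs Hr1 Hr1' E2.
by rewrite Eu.
Qed.

Lemma Lall (t : term) : Lstmt t.
Proof.
elim/term_ind2: t => [|s us IH] [|s' us'] P r r' //=.
- move=> _ _ Hr _ E; exfalso; apply: (Hr (s', P)); first by rewrite E.
  by exists [::]; rewrite cats0.
- move=> _ _ _ Hr' E; exfalso; apply: (Hr' (s, P)); first by rewrite -E.
  by exists [::]; rewrite cats0.
- move=> [ws wus] [ws' wus'] Hr Hr' [Es E]; subst s'.
  have Hj : forall r, NP P r -> NPj P 1 r.
    move=> r0 H a j' _ Ha [q Eq]; apply: (H a Ha); exists (j' :: q).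
    by rewrite Eq -cats1 -catA.
  have [-> ->] := LLgen IH wus wus' (etrans ws (esym ws')) (Hj _ Hr) (Hj _ Hr') E.
  done.
Qed.

Lemma Forall_all (Q : term -> Prop) (us : seq term) : (forall u, Q u) -> List.Forall Q us.
Proof. by move=> H; elim: us => // u us IH; constructor. Qed.

Lemma LN s us s' us' P r r' : wf_term arity (Node s us) -> wf_term arity (Node s' us') ->
  NPj P 1 r -> NPj P 1 r' -> canon (Node s us) P ++ r = canon (Node s' us') P ++ r' ->
  Node s us = Node s' us' /\ r = r'.
Proof.
move=> [ws wus] [ws' wus'] Hr Hr' /= [Es E]; subst s'.
have [-> ->] := LLgen (Forall_all us Lall) wus wus' (etrans ws (esym ws')) Hr Hr' E.
done.
Qed.

Fixpoint canonFR (g : seq term) (ls : seq nat) : seq L :=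
  match g, ls with t :: ts, l :: ls' => canon t (nseq l 0) ++ canonFR ts ls' | _, _ => [::] end.

Lemma head_canonFR g ls a : ohead (canonFR g ls) = Some a -> exists l, a.2 = nseq l 0.
Proof.
elim: g ls => [|t ts IH] [|l ls] //=; rewrite ohead_cat.
case: t => [|s us] /=; first exact: IH.
by move=> [<-]; exists l.
Qed.

Lemma head_canonF g m a : ohead (canonF g m) = Some a -> exists l, a.2 = nseq l 0.
Proof.
elim: g m => [|t ts IH] m //=; rewrite ohead_cat.
case: t => [|s us] /=; first exact: IH.
by move=> [<-]; exists m.
Qed.

Lemma NPj_zero P r : (forall a, ohead r = Some a -> exists l, a.2 = nseq l 0) -> NPj P 1 r.
Proof.
move=> H a j' Hj Ha [q Eq]; have [l El] := H a Ha.
have : j' \in a.2 by rewrite Eq mem_cat mem_rcons mem_head.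
by rewrite El mem_nseq => /andP[_ /eqP E]; move: Hj; rewrite E.
Qed.

Lemma wfF_cons (t : term) ts : wf_forest arity (t :: ts) -> wf_term arity t /\ wf_forest arity ts.
Proof. by move=> H; split; [apply: H; left | move=> u Hu; apply: H; right]. Qed.

Lemma red_cons (t : term) ts : reduced (t :: ts) -> t <> Bot Sig /\ reduced ts.
Proof. by move=> H; split; [apply: H; left | move=> u Hu; apply: H; right]. Qed.

Lemma FI (g : seq term) : forall ls f m, wf_forest arity g -> wf_forest arity f ->
  reduced g -> reduced f -> size ls = size g -> canonFR g ls = canonF f m -> g = f.
Proof.
elim: g => [|t ts IH] ls [|t' ts'] m wg wf rg rf //=.
- move=> _; have [H _] := red_cons rf; clear wf rf; case: t' H => // s us _.
- case: ls => // l ls _; have [H _] := red_cons rg; clear wg rg; case: t H IH => // s us _ _.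
- case: ls => // l ls [Hs].
  have [wt wts] := wfF_cons wg; have [wt' wts'] := wfF_cons wf.
  have [H rts] := red_cons rg; have [H' rts'] := red_cons rf.
  clear wg wf rg rf.
  case: t wt H => // s us wt _; case: t' wt' H' => // s' us' wt' _.
  rewrite !canonE /= => -[Es El E]; subst s'.
  have El' : l = m by rewrite -(size_nseq l 0) El size_nseq.
  subst l.
  have := @LN s us s us' (nseq m 0) (canonFR ts ls) (canonF ts' m.+1) wt wt'
     (NPj_zero (@head_canonFR ts ls)) (NPj_zero (@head_canonF ts' m.+1)).
  rewrite !canonE /= E => /(_ erefl) [-> E2].
  by rewrite (IH ls ts' m.+1 wts wts' rts rts' Hs E2).
Qed.

Lemma last_nseq0 n : last 0 (nseq n 0) = 0.
Proof. by elim: n. Qed.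

Lemma zero_tail P j l m q : 0 < j -> P ++ j :: nseq l 0 = nseq m 0 ++ q -> 0 \notin q -> l = 0.
Proof.
case: l => // l Hj E Hq; exfalso.
have H1 : last 1 (P ++ j :: nseq l.+1 0) = 0 by rewrite last_cat /= last_nseq0.
case: q E Hq => [|z q'] E Hq.
- have : j \in nseq m 0 ++ [::] by rewrite -E mem_cat mem_head orbT.
  by rewrite cats0 mem_nseq => /andP[_ /eqP Ej]; move: Hj; rewrite Ej.
- move: H1; rewrite E last_cat /= => H1.
  by move: (mem_last z q'); rewrite H1 (negbTE Hq).
Qed.

Lemma cat_split (T : Type) (s1 s2 s3 s4 : seq T) : s1 ++ s3 = s2 ++ s4 -> size s1 = size s2 ->
  s1 = s2 /\ s3 = s4.
Proof.
elim: s1 s2 => [|x s1 IH] [|y s2] //= E [Hs].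
by case: E => -> /IH /(_ Hs) [-> ->].
Qed.

Lemma onth_some (T : Type) (x0 : T) w i : i < size w -> onth w i = Some (nth x0 w i).
Proof. by elim: w i => [|x w IH] [|i] //= /IH. Qed.

Section GSide.
Variable w : seq L.
Definition good := forall i a, onth w i = Some a -> exists m q, a.2 = nseq m 0 ++ q /\ 0 \notin q.
Hypothesis Hgood : good.
Definition Eok (E : seq (nat * nat * nat)) := forall i j i' a b, (i, j, i') \in E ->
  onth w i = Some a -> onth w i' = Some b -> exists l, b.2 = a.2 ++ j :: nseq l 0.

Lemma Eok_cat E1 E2 : Eok (E1 ++ E2) -> Eok E1 /\ Eok E2.
Proof.
by move=> H; split=> i j i' a b Hin; apply: H; rewrite mem_cat Hin ?orbT.
Qed.

Definition TGstmt (t : term) := forall k P, k + deg_term t <= size w ->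
  map fst (take (deg_term t) (drop k w)) = decs_term t -> Eok (edges_term t k) ->
  (t <> Bot Sig -> exists a, onth w k = Some a /\ a.2 = P) ->
  take (deg_term t) (drop k w) = canon t P.

Lemma deg_pos (t : term) : t <> Bot Sig -> 0 < deg_term t.
Proof. by case: t. Qed.

Lemma match_node (T : Type) (x : T) (t : term) : t <> Bot Sig ->
  (match t with Bot => [::] | Node _ _ => [:: x] end) = [:: x].
Proof. by case: t. Qed.

Lemma TGL (k : nat) (P : seq nat) (a : L) : onth w k = Some a -> a.2 = P ->
  forall us : seq term, List.Forall TGstmt us -> forall j off, 0 < j ->
  off + sumn (map (@deg_term Sig) us) <= size w ->
  map fst (take (sumn (map (@deg_term Sig) us)) (drop off w)) = flatten (map (@decs_term Sig) us) ->
  Eok (edgesL k us j off) ->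
  take (sumn (map (@deg_term Sig) us)) (drop off w) = canonL P us j.
Proof.
move=> Ha HaP us0; elim=> [|u us Hu _ IHus] j off Hj /=.
- by rewrite !take0.
move=> Hsz.
have Hu_sz : off + deg_term u <= size w by lia.
rewrite takeD drop_drop map_cat => Hdec.
have Hsz_u : size (map fst (take (deg_term u) (drop off w))) = size (decs_term u).
  by rewrite size_map size_takel ?size_decs // size_drop; lia.
have [Hdu Hdus] := cat_split Hdec Hsz_u.
rewrite catA => /Eok_cat [/Eok_cat [Hpar Hedu] Hedus].
rewrite /canonL /= -/(canonL _ _ _); congr cat.
- apply: Hu => // Hnb.
  have Hoff : off < size w.
    by have := deg_pos Hnb; lia.
  exists (nth a w off); split; first exact: onth_some.
  move: Hpar; rewrite (match_node _ Hnb) => Hpar.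
  have [l El] := Hpar k j off a (nth a w off) (mem_head _ _) Ha (onth_some _ Hoff).
  have [m [q [Eq Hq]]] := Hgood (onth_some a Hoff).
  have l0 : l = 0 by apply: (@zero_tail P j l m q Hj _ Hq); rewrite -HaP -El -Eq.
  by rewrite El l0 /= cats1 HaP.
- rewrite (addnC (deg_term u)) in Hdus *.
  apply: IHus => //; first by lia.
Qed.

Lemma TGall (t : term) : TGstmt t.
Proof.
elim/term_ind2: t => [|s ts IH] k P //=.
- by rewrite take0.
move=> Hsz Hdec Hed /(_ ltac:(done)) [a [Ha HaP]].
have Hk : k < size w by lia.
have Ea : a = nth a w k by move: Ha; rewrite (onth_some a Hk) => -[].
move: Hdec; rewrite (drop_nth a Hk) /= -Ea => -[Hs Hdec].
have Ea2 : a = (s, P) by case: a Ea Ha HaP Hs => a1 a2 /= _ _ -> ->.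
rewrite {1}Ea2; congr cons.
apply: (TGL Ha HaP IH) => //; first by lia.
Qed.
Lemma GF (g : seq term) : forall off, reduced g -> off + deg g <= size w ->
  map fst (take (deg g) (drop off w)) = decs g -> Eok (edges_from g off) ->
  (forall i a, i \in roots_from g off -> onth w i = Some a -> exists l, a.2 = nseq l 0) ->
  exists ls, size ls = size g /\ take (deg g) (drop off w) = canonFR g ls.
Proof.
elim: g => [|t ts IH] off rg.
  by move=> *; exists [::]; rewrite /deg /= take0.
have [Ht rts] := red_cons rg.
rewrite /deg /decs /= -/(deg ts) -/(decs ts) => Hsz.
have Ht_sz : off + deg_term t <= size w by lia.
rewrite takeD drop_drop map_cat => Hdec.
have Hsz_t : size (map fst (take (deg_term t) (drop off w))) = size (decs_term t).
  by rewrite size_map size_takel ?size_decs // size_drop; lia.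
have [Hdt Hdts] := cat_split Hdec Hsz_t.
move=> /Eok_cat [Het Hets] Hroots.
have Hoff : off < size w by have := deg_pos Ht; lia.
have [x Hx] : exists x, onth w off = Some x.
  by move: Hoff; rewrite -onthTE; case: (onth w off) => // x _; exists x.
have [l El] : exists l, x.2 = nseq l 0.
  apply: (Hroots off); last exact: Hx.
  by rewrite mem_cat (match_node _ Ht) mem_seq1 eqxx.
rewrite (addnC (deg_term t)) in Hdts *.
have [ls [Hls E]] := IH (off + deg_term t) rts ltac:(lia) Hdts Hets
  ltac:(by move=> i a Hi; apply: Hroots; rewrite mem_cat Hi orbT).
exists (l :: ls); split; first by rewrite /= Hls.
rewrite /= E; congr cat.
by apply: TGall => // _; exists x.
Qed.
End GSide.

Lemma onth_In (T : Type) (w : seq T) i a : onth w i = Some a -> List.In a w.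
Proof.
elim: w i => [|x w IH] [|i] //=; first by move=> [->]; left.
by move/IH; right.
Qed.

Lemma canon_in (t : term) : forall P a, List.In a (canon t P) -> exists q, a.2 = P ++ q /\ 0 \notin q.
Proof.
elim/term_ind2: t => [|s ts IH] P a //=.
move=> [<-|]; first by exists [::]; rewrite cats0.
rewrite -/(canonL P ts 1).
have : 0 < 1 by [].
move: {-1}1 => j Hj.
elim: IH j Hj => [|u us Hu _ IHus] j Hj //=.
move=> Hin; case: (List.in_app_or _ _ _ Hin).
- move/Hu => [q [Eq Hq]]; exists (j :: q); split; first by rewrite Eq -cats1 -catA.
  by rewrite in_cons negb_or Hq andbT eq_sym -lt0n.
- by move/IHus; apply.
Qed.

Lemma good_canonF f m : good (canonF f m).
Proof.
move=> i a Ho; have := onth_In Ho; clear Ho; elim: f m => [|t ts IH] m //= Hin; case: (List.in_app_or _ _ _ Hin) => [/canon_in [q [Eq Hq]]|/IH //].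
by exists m, q.
Qed.

Lemma size_decsF (g : seq term) : size (decs g) = deg g.
Proof. by elim: g => //= t ts IH; rewrite size_cat size_decs -/(decs ts) IH. Qed.

Lemma key (f g : seq term) : wf_forest arity f -> reduced f -> wf_forest arity g -> reduced g ->
  @compatible _ (Ap Sig) (canonF f 0) g -> g = f.
Proof.
move=> wf rf wg rg [Hsz Hroot Hdec Hed].
have Hfst : map fst (canonF f 0) = decs g.
  apply: eq_from_onth => i; rewrite onth_map.
  case: (ltnP i (size (canonF f 0))) => Hi.
  - have [a Ha] : exists a, onth (canonF f 0) i = Some a.
      by move: Hi; rewrite -onthTE; case: onth => // a _; exists a.
    have [s Hs] : exists s, onth (decs g) i = Some s.
      by move: Hi; rewrite Hsz -size_decsF -onthTE; case: onth => // s _; exists s.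
    by rewrite Ha Hs /= (Hdec i s a Hs Ha).
  - by rewrite !onth_default // size_decsF -Hsz.
have [ls [Hls E]] := @GF (canonF f 0) (@good_canonF f 0) g 0 rg
  ltac:(by rewrite Hsz) ltac:(by rewrite drop0 -Hsz take_size) Hed Hroot.
move: E; rewrite drop0 -Hsz take_size => E.
by apply: (FI wg wf rg rf Hls); rewrite -E.
Qed.
End S.

Local Open Scope ring_scope.

Theorem proposition4p7 (K : fieldType) (charK : [pchar K] =i pred0)
  (Sig : Type) (arity : Sig -> nat)
  (n : nat) (f : 'I_n -> forest Sig) (c : 'I_n -> K) :
  injective f ->
  (forall i, wf_forest arity (f i)) ->
  (forall i, reduced (f i)) ->
  (forall w : seq (Ap Sig),
      \sum_(i < n) c i * rA_coef K (f i) w = 0) ->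
  forall i, c i = 0.
Proof.
move=> finj fwf fred H i.
have H1 : rA_coef K (f i) (canonF (f i) 0 : seq (Ap Sig)) = 1.
  rewrite /rA_coef; match goal with |- context [pselect ?P] => destruct (pselect P) as [Hc|Hc] end => //.
  by exfalso; apply: Hc; apply: compat_self.
have H0 : forall i0, i0 != i -> c i0 * rA_coef K (f i0) (canonF (f i) 0 : seq (Ap Sig)) = 0.
  move=> i0 Hi0; rewrite /rA_coef.
  match goal with |- context [pselect ?P] => destruct (pselect P) as [Hc|Hc] end; last by rewrite mulr0.
  have := key (fwf i) (fred i) (fwf i0) (fred i0) Hc.
  by move/finj => E; rewrite E eqxx in Hi0.
have := H (canonF (f i) 0).
rewrite (bigD1 i) //= big1 ?addr0 ?H1 ?mulr1 //.
Qed.
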